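(* Let $P=\langle \mathit{Init}(X),\mathit{Tr}(X,X'),\mathit{Bad}(X)\rangle$ be a safety problem over $\mathcal{T}$, and suppose the Quic3 rules are applied to $P$ in any order starting from the initial state. Then in every step of Quic3, for every $k<N$, the sequence $\forall Q_1,\dots,\forall Q_k$ is an interpolation sequence of length $k$ for $P$.
   Context: $\mathcal{T}$ is the combined first-order theory of linear integer arithmetic and arrays, with sorts $\mathsf{int}$ and $\mathsf{array}$ (array indices and values have sort $\mathsf{int}$; $\mathsf{sel}$, $\mathit{store}$ are array read/write). Formulas may contain uninterpreted constants; among them are Skolem constants $\mathit{SK}=\{sk_i: i\in\mathbb{N}\}$ of sort $\mathsf{int}$. Variables of sort $\mathsf{int}$ are named $v_i$. A substitution is a partial sort-respecting map from variables to terms; $\varphi\sigma$ is its application; $\emptyset$ is the empty substitution. The Skolem substitution $\mathit{sk}$ maps $v_i\mapsto sk_i$; $L_{\mathit{sk}}$ denotes $L\,\mathit{sk}$. $\mathit{Const}(\varphi)$, $\mathit{FVars}(\varphi)$ denote uninterpreted constants and free variables; $\forall\varphi$ / $\exists\varphi$ are universal / existential closures over all free variables; $\varphi\Rightarrow\psi$ means $\varphi\to\psi$ is valid in $\mathcal{T}$. For a set $U$ of constants and formula $\varphi$, $\mathit{abs}(U,\varphi)=(\psi,\sigma)$: $\psi$ is obtained from $\varphi$ by replacing each constant of $U$ by a variable not free in $\varphi$, each $sk_i\in U$ being replaced by $v_i$; $\mathit{dom}(\sigma)=\mathit{FVars}(\psi)\setminus\mathit{FVars}(\varphi)$, $\psi\sigma=\varphi$,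 and no constant of $U$ occurs in $\psi$. For ground $\varphi$, $\exists U\cdot\varphi$ denotes $\exists\psi$ with $(\psi,\_)=\mathit{abs}(U,\varphi)$. A partial model-based projection $\textsc{pMbp}(U,\varphi,M)=(\psi,W)$ (for ground $\varphi$, $M\models\varphi$, $U\subseteq\mathit{Const}(\varphi)$) satisfies: $\psi$ is a conjunction of ground literals; $W\subseteq U$, $\mathit{Const}(\psi)\subseteq\mathit{Const}(\varphi)\setminus(U\setminus W)$; $\psi\Rightarrow\exists(U\setminus W)\cdot\varphi$; $M\models\psi$; for fixed $U,\varphi$ only finitely many values arise over all models $M$; $W$ contains no array constant. For ground $A,B$ with $A\wedge B$ unsatisfiable, $\textsc{Itp}(A,B)$ is an interpolant: a ground formula $I$ with $\mathit{Const}(I)\subseteq\mathit{Const}(A)\cap\mathit{Const}(B)$, $A\Rightarrow I$ and $I\Rightarrow\neg B$. A safety problem $\langle \mathit{Init}(X),\mathit{Tr}(X,X'),\mathit{Bad}(X)\rangle$ has a finite set $X$ of constants disjoint from $\mathit{SK}$, primed copy $X'=\{a'\mid a\in X\}$, and quantifier-free ground $\mathit{Init},\mathit{Bad}$ over $X$ and $\mathit{Tr}$ over $X\cup X'$. $\varphi'$ replaces each $a\in X$ by $a'$ in $\varphi$, and for $L'$ a formula over $X'\cup\mathit{SK}$, $L$ denotes its unprimed version. $\mathcal{F}(A)=(A(X)\wedge\mathit{Tr}(X,X'))\vee\mathit{Init}(X')$. An interpolation sequence of length $k$ for $P$ is a sequence of formulas $I_1(X),\dots,I_k(X)$ with $\mathit{Init}(X)\Rightarrow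 I_1(X)$, $I_j(X)\wedge\mathit{Tr}(X,X')\Rightarrow I_{j+1}(X')$ for $1\le j\le k-1$, and $I_k(X)\Rightarrow\neg\mathit{Bad}(X)$. A frame $Q$ is a finite set of pairs $(\ell,\sigma)$, $\ell$ quantifier-free over $X$ with free variables of sort $\mathsf{int}$, $\sigma$ a substitution with $\mathit{FVars}(\ell)\subseteq\mathit{dom}(\sigma)$ and range in $X'\cup\mathit{SK}$; $\forall Q$ is the set (read as conjunction) of $\forall\ell$ and $\mathit{qi}(Q)$ the conjunction of $\ell\sigma$ over $(\ell,\sigma)\in Q$. A proof obligation (POB) is $\langle m,\sigma,i\rangle$ with $m$ a conjunction of literals over $X$ with free $\mathsf{int}$ variables, $m\sigma$ ground, $i\in\mathbb N$. Quic3 maintains a POB queue $\mathcal Q$, a level $N$ and frames $Q_0,Q_1,\dots$; initially $\mathcal Q=\emptyset$, $N=0$, $Q_0=\{(\mathit{Init},\emptyset)\}$, $Q_i=\emptyset$ for $i>0$. It applies, in any order, the rules: (Safe) if some $i<N$ has $\forall Q_i\subseteq\forall Q_{i+1}$, return Safe; (Cex) if some $\langle m,\sigma,0\rangle\in\mathcal Q$, return Cex; (Unfold) if $\mathit{qi}(Q_N)\Rightarrow\neg\mathit{Bad}$, set $N\gets N+1$; (Candidate) if $m$ is a monomial with $m\Rightarrow\mathit{qi}(Q_N)\wedge\mathit{Bad}$, add $\langle m,\emptyset,N\rangle$ to $\mathcal Q$; (Predecessor) if $\langle m,\xi,i+1\rangle\in\mathcal Q$ and $M\models\mathit{qi}(Q_i)\wedge\mathit{Tr}\wedge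 m'_{\mathit{sk}}$, add $\langle\psi,\sigma,i\rangle$ where $(\psi,\sigma)=\mathit{abs}(U,\varphi)$ and $(\varphi,U)=\textsc{pMbp}(X'\cup\mathit{SK},\mathit{Tr}\wedge m'_{\mathit{sk}},M)$; (NewLemma) for $0\le i<N$ and $\langle m,\sigma,i+1\rangle\in\mathcal Q$ with $\mathcal F(\mathit{qi}(Q_i))\wedge m'_{\mathit{sk}}$ unsatisfiable, let $L'=\textsc{Itp}(\mathcal F(\mathit{qi}(Q_i)),m'_{\mathit{sk}})$ and $(\ell,\_)=\mathit{abs}(\mathit{SK},L)$, and add $(\ell,\sigma)$ to $Q_j$ for all $j\le i+1$; (Push) for $0\le i<N$ and $((\varphi\vee\psi),\sigma)\in Q_i$, if $(\varphi,\sigma)\notin Q_{i+1}$, $\mathit{Init}\Rightarrow\forall\varphi$ and $(\forall\varphi)\wedge\forall Q_i\wedge\mathit{qi}(Q_i)\wedge\mathit{Tr}\Rightarrow\forall\varphi'$, add $(\varphi,\sigma)$ to $Q_j$ for all $j\le i+1$. *)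

(* Defs.v *)
From Stdlib Require Import ZArith List Bool Arith Relations.
Import ListNotations.

(* A state constant a in X
   is an unprimed one; its primed copy a' has the same name, primed.    *)
Inductive icnst : Type := Sk (i : nat) | IC (primed : bool) (n : nat).
Inductive acnst : Type := AC (primed : bool) (n : nat).
Inductive cnst : Type := CI (c : icnst) | CA (c : acnst).

Definition cnst_eq_dec : forall x y : cnst, {x = y} + {x <> y}.
Proof. repeat decide equality. Defined.

Inductive iterm : Type :=
| IVar (i : nat)
| ICst (c : icnst)
| INum (z : Z)
| IAdd (t1 t2 : iterm)
| IMul (z : Z) (t : iterm)
| ISel (a : aterm) (t : iterm)
with aterm : Type :=
| ACst (c : acnst)
| AStore (a : aterm) (i v : iterm).

Inductive atom : Type :=
| ALe (t1 t2 : iterm)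
| AIEq (t1 t2 : iterm)
| AAEq (a1 a2 : aterm).

Inductive formula : Type :=
| FTrue | FFalse
| FAtom (a : atom)
| FNot (f : formula)
| FAnd (f g : formula)
| FOr (f g : formula)
| FImp (f g : formula)
| FAll (i : nat) (f : formula)
| FEx (i : nat) (f : formula).

Record model : Type := { mint : icnst -> Z; marr : acnst -> (Z -> Z) }.
Definition valuation := nat -> Z.
Definition upd (r : valuation) (i : nat) (z : Z) : valuation :=
  fun j => if Nat.eqb j i then z else r j.

Fixpoint ieval (M : model) (r : valuation) (t : iterm) : Z :=
  match t with
  | IVar i => r i
  | ICst c => mint M c
  | INum z => z
  | IAdd a b => (ieval M r a + ieval M r b)%Z
  | IMul z a => (z * ieval M r a)%Z
  | ISel a u => aeval M r a (ieval M r u)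
  end
with aeval (M : model) (r : valuation) (a : aterm) : Z -> Z :=
  match a with
  | ACst c => marr M c
  | AStore b i v =>
      fun j => if Z.eqb j (ieval M r i) then ieval M r v else aeval M r b j
  end.

Definition atom_sat (M : model) (r : valuation) (a : atom) : Prop :=
  match a with
  | ALe t1 t2 => (ieval M r t1 <= ieval M r t2)%Z
  | AIEq t1 t2 => ieval M r t1 = ieval M r t2
  | AAEq a1 a2 => forall j, aeval M r a1 j = aeval M r a2 j
  end.

Fixpoint sat (M : model) (r : valuation) (f : formula) : Prop :=
  match f with
  | FTrue => True
  | FFalse => False
  | FAtom a => atom_sat M r a
  | FNot g => ~ sat M r g
  | FAnd g h => sat M r g /\ sat M r h
  | FOr g h => sat M r g \/ sat M r h
  | FImp g h => sat M r g -> sat M r h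
  | FAll i g => forall z, sat M (upd r i z) g
  | FEx i g => exists z, sat M (upd r i z) g
  end.

Definition models (M : model) (f : formula) : Prop := forall r, sat M r f.
Definition implies (f g : formula) : Prop :=
  forall M r, sat M r f -> sat M r g.
Definition unsatisfiable (f : formula) : Prop := forall M r, ~ sat M r f.

Fixpoint ivars (t : iterm) : list nat :=
  match t with
  | IVar i => [i]
  | ICst _ | INum _ => []
  | IAdd a b => ivars a ++ ivars b
  | IMul _ a => ivars a
  | ISel a u => avars a ++ ivars u
  end
with avars (a : aterm) : list nat :=
  match a with
  | ACst _ => []
  | AStore b i v => avars b ++ ivars i ++ ivars v
  end.

Definition atom_vars (a : atom) : list nat :=
  match a with
  | ALe t1 t2 | AIEq t1 t2 => ivars t1 ++ ivars t2
  | AAEq a1 a2 => avars a1 ++ avars a2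
  end.

Fixpoint fvars (f : formula) : list nat :=
  match f with
  | FTrue | FFalse => []
  | FAtom a => atom_vars a
  | FNot g => fvars g
  | FAnd g h | FOr g h | FImp g h => fvars g ++ fvars h
  | FAll i g | FEx i g => remove Nat.eq_dec i (fvars g)
  end.

Fixpoint iconsts (t : iterm) : list cnst :=
  match t with
  | IVar _ | INum _ => []
  | ICst c => [CI c]
  | IAdd a b => iconsts a ++ iconsts b
  | IMul _ a => iconsts a
  | ISel a u => aconsts a ++ iconsts u
  end
with aconsts (a : aterm) : list cnst :=
  match a with
  | ACst c => [CA c]
  | AStore b i v => aconsts b ++ iconsts i ++ iconsts v
  end.

Definition atom_consts (a : atom) : list cnst :=
  match a with
  | ALe t1 t2 | AIEq t1 t2 => iconsts t1 ++ iconsts t2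
  | AAEq a1 a2 => aconsts a1 ++ aconsts a2
  end.

Fixpoint consts (f : formula) : list cnst :=
  match f with
  | FTrue | FFalse => []
  | FAtom a => atom_consts a
  | FNot g | FAll _ g | FEx _ g => consts g
  | FAnd g h | FOr g h | FImp g h => consts g ++ consts h
  end.

Fixpoint qfree (f : formula) : Prop :=
  match f with
  | FTrue | FFalse | FAtom _ => True
  | FNot g => qfree g
  | FAnd g h | FOr g h | FImp g h => qfree g /\ qfree h
  | FAll _ _ | FEx _ _ => False
  end.

Definition ground (f : formula) : Prop := qfree f /\ fvars f = [].

Definition is_literal (f : formula) : Prop :=
  match f with
  | FAtom _ => True
  | FNot (FAtom _) => True
  | _ => False
  end.

Fixpoint is_monomial (f : formula) : Prop :=
  match f with
  | FTrue => True
  | FAnd g h => is_monomial g /\ is_monomial h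
  | _ => is_literal f
  end.

Definition is_sk (c : cnst) : Prop := exists i, c = CI (Sk i).
Definition is_int_cnst (c : cnst) : Prop := exists c', c = CI c'.

Definition uclose (f : formula) : formula := fold_right FAll f (fvars f).

(* Substitutions: partial, sort-respecting maps from (int) variables to
   (int) constants -- all substitutions of the calculus have range in
   X' u SK.                                                            *)
Definition subst := nat -> option icnst.
Definition empty_subst : subst := fun _ => None.
Definition sk_subst : subst := fun i => Some (Sk i).
Definition subst_remove (s : subst) (i : nat) : subst :=
  fun j => if Nat.eqb j i then None else s j.

Fixpoint isubst (s : subst) (t : iterm) : iterm :=
  match t with
  | IVar i => match s i with Some c => ICst c | None => IVar i end
  | ICst c => ICst c
  | INum z => INum z
  | IAdd a b => IAdd (isubst s a) (isubst s b)
  | IMul z a => IMul z (isubst s a)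
  | ISel a u => ISel (asubst s a) (isubst s u)
  end
with asubst (s : subst) (a : aterm) : aterm :=
  match a with
  | ACst c => ACst c
  | AStore b i v => AStore (asubst s b) (isubst s i) (isubst s v)
  end.

Definition atom_subst (s : subst) (a : atom) : atom :=
  match a with
  | ALe t1 t2 => ALe (isubst s t1) (isubst s t2)
  | AIEq t1 t2 => AIEq (isubst s t1) (isubst s t2)
  | AAEq a1 a2 => AAEq (asubst s a1) (asubst s a2)
  end.

Fixpoint fsubst (s : subst) (f : formula) : formula :=
  match f with
  | FTrue => FTrue
  | FFalse => FFalse
  | FAtom a => FAtom (atom_subst s a)
  | FNot g => FNot (fsubst s g)
  | FAnd g h => FAnd (fsubst s g) (fsubst s h)
  | FOr g h => FOr (fsubst s g) (fsubst s h)
  | FImp g h => FImp (fsubst s g) (fsubst s h)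
  | FAll i g => FAll i (fsubst (subst_remove s i) g)
  | FEx i g => FEx i (fsubst (subst_remove s i) g)
  end.

Fixpoint imap (fi : icnst -> icnst) (fa : acnst -> acnst) (t : iterm) : iterm :=
  match t with
  | IVar i => IVar i
  | ICst c => ICst (fi c)
  | INum z => INum z
  | IAdd a b => IAdd (imap fi fa a) (imap fi fa b)
  | IMul z a => IMul z (imap fi fa a)
  | ISel a u => ISel (amap fi fa a) (imap fi fa u)
  end
with amap (fi : icnst -> icnst) (fa : acnst -> acnst) (a : aterm) : aterm :=
  match a with
  | ACst c => ACst (fa c)
  | AStore b i v => AStore (amap fi fa b) (imap fi fa i) (imap fi fa v)
  end.

Definition atom_map fi fa (a : atom) : atom :=
  match a with
  | ALe t1 t2 => ALe (imap fi fa t1) (imap fi fa t2)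
  | AIEq t1 t2 => AIEq (imap fi fa t1) (imap fi fa t2)
  | AAEq a1 a2 => AAEq (amap fi fa a1) (amap fi fa a2)
  end.

Fixpoint fmap fi fa (f : formula) : formula :=
  match f with
  | FTrue => FTrue
  | FFalse => FFalse
  | FAtom a => FAtom (atom_map fi fa a)
  | FNot g => FNot (fmap fi fa g)
  | FAnd g h => FAnd (fmap fi fa g) (fmap fi fa h)
  | FOr g h => FOr (fmap fi fa g) (fmap fi fa h)
  | FImp g h => FImp (fmap fi fa g) (fmap fi fa h)
  | FAll i g => FAll i (fmap fi fa g)
  | FEx i g => FEx i (fmap fi fa g)
  end.

Definition inX (X : list cnst) (c : cnst) : bool :=
  if in_dec cnst_eq_dec c X then true else false.

Definition prime_ic (X : list cnst) (c : icnst) : icnst :=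
  match c with
  | IC false n => if inX X (CI c) then IC true n else c
  | _ => c
  end.
Definition prime_ac (X : list cnst) (c : acnst) : acnst :=
  match c with
  | AC false n => if inX X (CA c) then AC true n else c
  | _ => c
  end.
Definition unprime_ic (X : list cnst) (c : icnst) : icnst :=
  match c with
  | IC true n => if inX X (CI (IC false n)) then IC false n else c
  | _ => c
  end.
Definition unprime_ac (X : list cnst) (c : acnst) : acnst :=
  match c with
  | AC true n => if inX X (CA (AC false n)) then AC false n else c
  | _ => c
  end.

Definition prime (X : list cnst) (f : formula) : formula :=
  fmap (prime_ic X) (prime_ac X) f.
Definition unprime (X : list cnst) (f : formula) : formula :=
  fmap (unprime_ic X) (unprime_ac X) f.

Definition prime_cnst (c : cnst) : cnst :=
  match c with
  | CI (IC _ n) => CI (IC true n)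
  | CA (AC _ n) => CA (AC true n)
  | _ => c
  end.
Definition is_state_cnst (c : cnst) : Prop :=
  (exists n, c = CI (IC false n)) \/ (exists n, c = CA (AC false n)).

Definition inXp (X : list cnst) (c : cnst) : Prop :=
  exists a, In a X /\ c = prime_cnst a.

Record safety_problem : Type := {
  SX : list cnst;
  Init : formula;
  Tr : formula;
  Bad : formula
}.

Definition wf_problem (P : safety_problem) : Prop :=
  (forall c, In c (SX P) -> is_state_cnst c) /\
  ground (Init P) /\ (forall c, In c (consts (Init P)) -> In c (SX P)) /\
  ground (Bad P) /\ (forall c, In c (consts (Bad P)) -> In c (SX P)) /\
  ground (Tr P) /\
  (forall c, In c (consts (Tr P)) -> In c (SX P) \/ inXp (SX P) c).

Definition Fop (P : safety_problem) (A : formula) : formula :=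
  FOr (FAnd A (Tr P)) (prime (SX P) (Init P)).

Definition interp_seq (P : safety_problem) (I : nat -> formula) (k : nat) : Prop :=
  implies (Init P) (I 1) /\
  (forall j, 1 <= j -> j <= k - 1 ->
     implies (FAnd (I j) (Tr P)) (prime (SX P) (I (S j)))) /\
  implies (I k) (FNot (Bad P)).

Definition frame := list (formula * subst).

Definition forallQ (Q : frame) : formula :=
  fold_right (fun p acc => FAnd (uclose (fst p)) acc) FTrue Q.
Definition qi (Q : frame) : formula :=
  fold_right (fun p acc => FAnd (fsubst (snd p) (fst p)) acc) FTrue Q.

Definition abs_spec (U : cnst -> Prop) (phi psi : formula) (sigma : subst) : Prop :=
  (forall x, sigma x <> None <-> (In x (fvars psi) /\ ~ In x (fvars phi))) /\
  fsubst sigma psi = phi /\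
  (forall c, In c (consts psi) -> ~ U c) /\
  (forall x c, sigma x = Some c -> U (CI c)) /\
  (forall x y c, sigma x = Some c -> sigma y = Some c -> x = y) /\
  (forall x i, sigma x = Some (Sk i) -> x = i).

Definition agree_outside (V : cnst -> Prop) (M M' : model) : Prop :=
  (forall c, ~ V (CI c) -> mint M c = mint M' c) /\
  (forall c, ~ V (CA c) -> marr M c = marr M' c).

Definition implies_exists (psi : formula) (V : cnst -> Prop) (phi : formula) : Prop :=
  forall M r, sat M r psi -> exists M', agree_outside V M M' /\ sat M' r phi.

Definition pmbp_spec (U : cnst -> Prop) (phi : formula) (M : model)
    (psi : formula) (W : cnst -> Prop) : Prop :=
  is_monomial psi /\ ground psi /\
  (forall c, W c -> U c) /\
  (forall c, In c (consts psi) -> In c (consts phi) /\ ~ (U c /\ ~ W c)) /\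
  implies_exists psi (fun c => U c /\ ~ W c) phi /\
  models M psi /\
  (forall c, W c -> is_int_cnst c).

Definition itp_spec (A B I : formula) : Prop :=
  ground I /\
  (forall c, In c (consts I) -> In c (consts A) /\ In c (consts B)) /\
  implies A I /\ implies I (FNot B).

Definition pob := (formula * subst * nat)%type.

Record q3state : Type := {
  pobs : list pob;
  level : nat;
  frames : nat -> frame
}.

Definition init_state (P : safety_problem) : q3state :=
  {| pobs := [];
     level := 0;
     frames := fun i => if Nat.eqb i 0 then [(Init P, empty_subst)] else [] |}.

Definition add_lemma (Q : nat -> frame) (i : nat) (p : formula * subst) : nat -> frame :=
  fun j => if Nat.leb j (S i) then p :: Q j else Q j.

Definition msk (P : safety_problem) (m : formula) : formula :=
  fsubst sk_subst (prime (SX P) m).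

Inductive q3step (P : safety_problem) : q3state -> q3state -> Prop :=
| RUnfold s :
    implies (qi (frames s (level s))) (FNot (Bad P)) ->
    q3step P s {| pobs := pobs s; level := S (level s); frames := frames s |}
| RCandidate s m :
    is_monomial m -> ground m ->
    (forall c, In c (consts m) -> In c (SX P)) ->
    implies m (FAnd (qi (frames s (level s))) (Bad P)) ->
    q3step P s {| pobs := (m, empty_subst, level s) :: pobs s;
                  level := level s; frames := frames s |}
| RPredecessor s m xi i M phi U psi sigma :
    In (m, xi, S i) (pobs s) ->
    models M (FAnd (qi (frames s i)) (FAnd (Tr P) (msk P m))) ->
    pmbp_spec (fun c => inXp (SX P) c \/ is_sk c) (FAnd (Tr P) (msk P m)) M phi U ->
    abs_spec U phi psi sigma ->
    q3step P s {| pobs := (psi, sigma, i) :: pobs s;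
                  level := level s; frames := frames s |}
| RNewLemma s m sigma i L' l tau :
    i < level s ->
    In (m, sigma, S i) (pobs s) ->
    unsatisfiable (FAnd (Fop P (qi (frames s i))) (msk P m)) ->
    itp_spec (Fop P (qi (frames s i))) (msk P m) L' ->
    abs_spec is_sk (unprime (SX P) L') l tau ->
    q3step P s {| pobs := pobs s; level := level s;
                  frames := add_lemma (frames s) i (l, sigma) |}
| RPush s phi psi sigma i :
    i < level s ->
    In (FOr phi psi, sigma) (frames s i) ->
    ~ In (phi, sigma) (frames s (S i)) ->
    implies (Init P) (uclose phi) ->
    implies (FAnd (uclose phi)
               (FAnd (forallQ (frames s i)) (FAnd (qi (frames s i)) (Tr P))))
            (prime (SX P) (uclose phi)) ->
    q3step P s {| pobs := pobs s; level := level s;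
                  frames := add_lemma (frames s) i (phi, sigma) |}.

Definition reachable (P : safety_problem) (s : q3state) : Prop :=
  clos_refl_trans q3state (q3step P) (init_state P) s.

(* Main.v *)
Require Import Defs.
From Stdlib Require Import ZArith List Arith Relations FunctionalExtensionality Lia.
Import ListNotations.

Scheme iterm_ind' := Induction for iterm Sort Prop
  with aterm_ind' := Induction for aterm Sort Prop.
Combined Scheme term_ind from iterm_ind', aterm_ind'.

Definition Mmap (M : model) fi fa : model :=
  {| mint := fun c => mint M (fi c); marr := fun c => marr M (fa c) |}.

Ltac rw_all := repeat match goal with H : forall _, _ = _ |- _ => rewrite H; clear H
                                     | H : _ = _ |- _ => rewrite H; clear H end.

Lemma eval_map fi fa M r :
  (forall t, ieval M r (imap fi fa t) = ieval (Mmap M fi fa) r t) /\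
  (forall a, aeval M r (amap fi fa a) = aeval (Mmap M fi fa) r a).
Proof. apply term_ind; intros; simpl; rw_all; reflexivity. Qed.

Lemma sat_map fi fa f : forall M r, sat M r (fmap fi fa f) <-> sat (Mmap M fi fa) r f.
Proof.
  induction f; intros M r; simpl; try tauto.
  - destruct a; simpl; rewrite ?(proj1 (eval_map fi fa M r)), ?(proj2 (eval_map fi fa M r)); tauto.
  - rewrite IHf; tauto.
  - rewrite IHf1, IHf2; tauto.
  - rewrite IHf1, IHf2; tauto.
  - rewrite IHf1, IHf2; tauto.
  - split; intros H z; apply IHf; auto.
  - split; intros [z H]; exists z; apply IHf; auto.
Qed.

Definition rs (M : model) (s : subst) (r : valuation) : valuation :=
  fun i => match s i with Some c => mint M c | None => r i end.

Lemma eval_subst M s r :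
  (forall t, ieval M r (isubst s t) = ieval M (rs M s r) t) /\
  (forall a, aeval M r (asubst s a) = aeval M (rs M s r) a).
Proof.
  apply term_ind; intros; simpl; rw_all; try reflexivity.
  unfold rs; destruct (s i); reflexivity.
Qed.

Lemma rs_upd M s r i z : rs M (subst_remove s i) (upd r i z) = upd (rs M s r) i z.
Proof.
  apply functional_extensionality; intro x; unfold rs, subst_remove, upd.
  destruct (Nat.eqb x i); reflexivity.
Qed.

Lemma sat_subst M f : forall s r, sat M r (fsubst s f) <-> sat M (rs M s r) f.
Proof.
  induction f; intros s r; simpl; try tauto.
  - destruct a; simpl; rewrite ?(proj1 (eval_subst M s r)), ?(proj2 (eval_subst M s r)); tauto.
  - rewrite IHf; tauto.
  - rewrite IHf1, IHf2; tauto.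
  - rewrite IHf1, IHf2; tauto.
  - rewrite IHf1, IHf2; tauto.
  - split; intros H z; specialize (H z); rewrite IHf, rs_upd in *; auto.
  - split; intros [z H]; exists z; rewrite IHf, rs_upd in *; auto.
Qed.

Definition cagree (M N : model) (c : cnst) : Prop :=
  match c with CI k => mint M k = mint N k | CA a => marr M a = marr N a end.
Definition agree_on (l : list cnst) M N := forall c, In c l -> cagree M N c.

Lemma agree_app l1 l2 M N : agree_on (l1 ++ l2) M N -> agree_on l1 M N /\ agree_on l2 M N.
Proof. intro H; split; intros c Hc; apply H; apply in_or_app; auto. Qed.

Lemma eval_consts M N r :
  (forall t, agree_on (iconsts t) M N -> ieval M r t = ieval N r t) /\
  (forall a, agree_on (aconsts a) M N -> aeval M r a = aeval N r a).
Proof.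
  apply term_ind; intros; simpl in *;
  repeat match goal with H : agree_on (_ ++ _) _ _ |- _ => apply agree_app in H; destruct H end;
  try (rewrite H by assumption); try (rewrite H0 by assumption); try (rewrite H1 by assumption);
  try reflexivity.
  - apply (H (CI c)); simpl; auto.
  - apply (H (CA c)); simpl; auto.
Qed.

Lemma sat_consts M N f : forall r, agree_on (consts f) M N -> (sat M r f <-> sat N r f).
Proof.
  induction f; intros r H; simpl in *;
  repeat match goal with H : agree_on (_ ++ _) _ _ |- _ => apply agree_app in H; destruct H end;
  try tauto.
  - destruct a; simpl in *; apply agree_app in H; destruct H;
    rewrite ?(proj1 (eval_consts M N r) _ H), ?(proj1 (eval_consts M N r) _ H0),
      ?(proj2 (eval_consts M N r) _ H), ?(proj2 (eval_consts M N r) _ H0); tauto.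
  - rewrite IHf; tauto.
  - rewrite IHf1, IHf2 by assumption; tauto.
  - rewrite IHf1, IHf2 by assumption; tauto.
  - rewrite IHf1, IHf2 by assumption; tauto.
  - split; intros H1 z; apply (IHf (upd r i z)); auto.
  - split; intros [z H1]; exists z; apply (IHf (upd r i z)); auto.
Qed.

Lemma eval_vars M r r' :
  (forall t, (forall x, In x (ivars t) -> r x = r' x) -> ieval M r t = ieval M r' t) /\
  (forall a, (forall x, In x (avars a) -> r x = r' x) -> aeval M r a = aeval M r' a).
Proof.
  apply term_ind; intros; simpl in *;
  try (rewrite H by (intros; auto 7 using in_or_app));
  try (rewrite H0 by (intros; auto 7 using in_or_app));
  try (rewrite H1 by (intros; auto 7 using in_or_app)); auto.
Qed.

Lemma sat_vars M f : forall r r', (forall x, In x (fvars f) -> r x = r' x) -> (sat M r f <-> sat M r' f).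
Proof.
  induction f; intros r r' H; simpl in *; try tauto.
  - destruct a; simpl in *;
    rewrite ?(proj1 (eval_vars M r r') t1), ?(proj1 (eval_vars M r r') t2),
      ?(proj2 (eval_vars M r r') a1), ?(proj2 (eval_vars M r r') a2) by (intros; auto using in_or_app); tauto.
  - rewrite (IHf r r'); tauto.
  - rewrite (IHf1 r r'), (IHf2 r r') by (intros; auto using in_or_app); tauto.
  - rewrite (IHf1 r r'), (IHf2 r r') by (intros; auto using in_or_app); tauto.
  - rewrite (IHf1 r r'), (IHf2 r r') by (intros; auto using in_or_app); tauto.
  - assert (E : forall z, sat M (upd r i z) f <-> sat M (upd r' i z) f).
    { intro z; apply IHf; intros x Hx; unfold upd.
      destruct (Nat.eqb x i) eqn:E; auto. apply H. apply in_in_remove; auto.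
      apply Nat.eqb_neq; auto. }
    split; intros H1 z; apply E; auto.
  - assert (E : forall z, sat M (upd r i z) f <-> sat M (upd r' i z) f).
    { intro z; apply IHf; intros x Hx; unfold upd.
      destruct (Nat.eqb x i) eqn:E; auto. apply H. apply in_in_remove; auto.
      apply Nat.eqb_neq; auto. }
    split; intros [z H1]; exists z; apply E; auto.
Qed.

Lemma fold_all_elim M f l : forall r, sat M r (fold_right FAll f l) ->
  forall r', (forall x, ~ In x l -> r' x = r x) -> sat M r' f.
Proof.
  induction l as [|i l IH]; intros r H r' Hr; simpl in *.
  - rewrite (sat_vars M f r' r); auto.
  - apply (IH (upd r i (r' i)) (H (r' i))). intros x Hx; unfold upd.
    destruct (Nat.eqb x i) eqn:E. apply Nat.eqb_eq in E; subst; auto.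
    apply Hr. intros [->|]; auto. rewrite Nat.eqb_refl in E; discriminate.
Qed.

Lemma sat_uclose_elim M f r : sat M r (uclose f) -> forall r', sat M r' f.
Proof.
  intros H r'.
  set (r2 := fun x => if in_dec Nat.eq_dec x (fvars f) then r' x else r x).
  apply (sat_vars M f r2 r'). intros x Hx; unfold r2; destruct in_dec; tauto.
  apply (fold_all_elim M f (fvars f) r H). intros x Hx; unfold r2; destruct in_dec; tauto.
Qed.

Lemma sat_uclose_intro M f r : (forall r', sat M r' f) -> sat M r (uclose f).
Proof.
  unfold uclose; generalize (fvars f) r. induction l; intros; simpl; auto.
Qed.

Lemma consts_uclose f : consts (uclose f) = consts f.
Proof. unfold uclose; generalize (fvars f); induction l; simpl; auto. Qed.

Lemma vars_map fi fa :
  (forall t, ivars (imap fi fa t) = ivars t) /\ (forall a, avars (amap fi fa a) = avars a).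
Proof. apply term_ind; intros; simpl; rw_all; reflexivity. Qed.

Lemma fvars_map fi fa f : fvars (fmap fi fa f) = fvars f.
Proof.
  induction f; simpl; rw_all; auto.
  destruct a; simpl; rewrite ?(proj1 (vars_map fi fa)), ?(proj2 (vars_map fi fa)); auto.
Qed.

Definition cmap fi fa (c : cnst) : cnst :=
  match c with CI k => CI (fi k) | CA a => CA (fa a) end.

Lemma consts_map_t fi fa :
  (forall t c, In c (iconsts (imap fi fa t)) -> exists c0, In c0 (iconsts t) /\ c = cmap fi fa c0) /\
  (forall a c, In c (aconsts (amap fi fa a)) -> exists c0, In c0 (aconsts a) /\ c = cmap fi fa c0).
Proof.
  apply term_ind; intros; simpl in *; try tauto.
  - destruct H as [<-|[]]. exists (CI c); simpl; auto.
  - apply in_app_or in H1; destruct H1 as [H1|H1];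
    [destruct (H _ H1) as [c0 [? ?]]|destruct (H0 _ H1) as [c0 [? ?]]]; eauto using in_or_app.
  - auto.
  - apply in_app_or in H1; destruct H1 as [H1|H1];
    [destruct (H _ H1) as [c0 [? ?]]|destruct (H0 _ H1) as [c0 [? ?]]]; eauto using in_or_app.
  - destruct H as [<-|[]]. exists (CA c); simpl; auto.
  - apply in_app_or in H2; destruct H2 as [H2|H2]; [|apply in_app_or in H2; destruct H2 as [H2|H2]];
    [destruct (H _ H2) as [c0 [? ?]]|destruct (H0 _ H2) as [c0 [? ?]]|destruct (H1 _ H2) as [c0 [? ?]]];
    eauto 7 using in_or_app.
Qed.

Lemma consts_map fi fa f c : In c (consts (fmap fi fa f)) -> exists c0, In c0 (consts f) /\ c = cmap fi fa c0.
Proof.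
  revert c; induction f; intros c H; simpl in *; try tauto;
  repeat match goal with H : In _ (_ ++ _) |- _ => apply in_app_or in H end;
  repeat match goal with H : _ \/ _ |- _ => destruct H end;
  try (destruct (IHf _ H) as [c0 [? ?]]; eauto);
  try (destruct (IHf1 _ H) as [c0 [? ?]]; eauto using in_or_app);
  try (destruct (IHf2 _ H) as [c0 [? ?]]; eauto using in_or_app).
  destruct a; simpl in *; apply in_app_or in H; destruct H;
  first [ destruct (proj1 (consts_map_t fi fa) _ _ H) as [c0 [? ?]]
        | destruct (proj2 (consts_map_t fi fa) _ _ H) as [c0 [? ?]]]; eauto using in_or_app.
Qed.

Lemma consts_subst_t s :
  (forall t c, In c (iconsts t) -> In c (iconsts (isubst s t))) /\
  (forall a c, In c (aconsts a) -> In c (aconsts (asubst s a))).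
Proof.
  apply term_ind; intros; simpl in *; try tauto.
  all: repeat match goal with H : In _ (_ ++ _) |- _ => apply in_app_or in H
                            | H : _ \/ _ |- _ => destruct H end.
  all: auto 6 using in_or_app.
Qed.

Lemma consts_subst s f c : In c (consts f) -> In c (consts (fsubst s f)).
Proof.
  revert s c; induction f; intros s c H; simpl in *; try tauto;
  repeat match goal with H : In _ (_ ++ _) |- _ => apply in_app_or in H end;
  repeat match goal with H : _ \/ _ |- _ => destruct H end; auto using in_or_app.
  destruct a; simpl in *; apply in_app_or in H; destruct H; apply in_or_app;
  auto using (proj1 (consts_subst_t s)), (proj2 (consts_subst_t s)).
Qed.

Lemma consts_subst_t2 s :
  (forall t c, In c (iconsts (isubst s t)) -> In c (iconsts t) \/ exists i k, s i = Some k /\ c = CI k) /\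
  (forall a c, In c (aconsts (asubst s a)) -> In c (aconsts a) \/ exists i k, s i = Some k /\ c = CI k).
Proof.
  apply term_ind; intros; simpl in *; try tauto.
  { destruct (s i) eqn:E; simpl in *; [|tauto]. destruct H as [<-|[]]; eauto 6. }
  all: repeat match goal with H : In _ (_ ++ _) |- _ => apply in_app_or in H
                            | H : _ \/ _ |- _ => destruct H end.
  all: repeat match goal with H : forall c, In c _ -> _, H' : In _ _ |- _ =>
     destruct (H _ H'); clear H end.
  all: eauto 7 using in_or_app.
Qed.

Lemma consts_subst2 f : forall s c, In c (consts (fsubst s f)) -> In c (consts f) \/ exists i k, s i = Some k /\ c = CI k.
Proof.
  induction f; intros s c H; simpl in *; try tauto.
  - destruct a; simpl in *; apply in_app_or in H; destruct H as [H|H];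
    first [ destruct (proj1 (consts_subst_t2 s) _ _ H)
          | destruct (proj2 (consts_subst_t2 s) _ _ H)]; eauto using in_or_app.
  - eauto.
  - apply in_app_or in H; destruct H as [H|H]; [destruct (IHf1 _ _ H)|destruct (IHf2 _ _ H)]; eauto using in_or_app.
  - apply in_app_or in H; destruct H as [H|H]; [destruct (IHf1 _ _ H)|destruct (IHf2 _ _ H)]; eauto using in_or_app.
  - apply in_app_or in H; destruct H as [H|H]; [destruct (IHf1 _ _ H)|destruct (IHf2 _ _ H)]; eauto using in_or_app.
  - destruct (IHf _ _ H) as [|[j [k [E ->]]]]; auto. right. exists j, k; split; auto.
    unfold subst_remove in E; destruct Nat.eqb; congruence.
  - destruct (IHf _ _ H) as [|[j [k [E ->]]]]; auto. right. exists j, k; split; auto.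
    unfold subst_remove in E; destruct Nat.eqb; congruence.
Qed.

Lemma sat_forallQ M r Q : sat M r (forallQ Q) <-> forall p, In p Q -> sat M r (uclose (fst p)).
Proof.
  induction Q; simpl. split; tauto.
  rewrite IHQ. split. intros [H1 H2] p [<-|Hp]; auto. intros H; split; auto.
Qed.

Lemma forallQ_qi M r Q : sat M r (forallQ Q) -> sat M r (qi Q).
Proof.
  induction Q; simpl; auto. intros [H1 H2]; split; auto.
  apply sat_subst. eapply sat_uclose_elim; eauto.
Qed.

Definition Inv (P : safety_problem) (s : q3state) : Prop :=
  (forall j, implies (Init P) (forallQ (frames s j))) /\
  (forall j, implies (FAnd (forallQ (frames s j)) (Tr P)) (prime (SX P) (forallQ (frames s (S j))))) /\
  (forall k, k < level s -> implies (forallQ (frames s k)) (FNot (Bad P))) /\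
  (forall j, incl (frames s (S j)) (frames s j)) /\
  (forall j p c, In p (frames s j) -> In c (consts (fst p)) -> ~ is_sk c) /\
  (forall m sg i c, In (m, sg, i) (pobs s) -> In c (consts m) -> In c (SX P)).

Definition PM (P : safety_problem) M := Mmap M (prime_ic (SX P)) (prime_ac (SX P)).
Definition UM (P : safety_problem) M := Mmap M (unprime_ic (SX P)) (unprime_ac (SX P)).

Lemma inX_true X c : In c X -> inX X c = true.
Proof. unfold inX; destruct in_dec; tauto. Qed.

Lemma state_not_sk P c : wf_problem P -> In c (SX P) -> ~ is_sk c.
Proof.
  intros [H _] Hc [i ->]. destruct (H _ Hc) as [[n E]|[n E]]; discriminate.
Qed.

Lemma incl_le (Q : nat -> frame) : (forall j, incl (Q (S j)) (Q j)) ->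
  forall j i, j <= i -> incl (Q i) (Q j).
Proof.
  intros H j i Hle; induction Hle. apply incl_refl. eapply incl_tran; eauto.
Qed.

Definition Nsk (M : model) (r' : valuation) : model :=
  {| mint := fun c => match c with Sk x => r' x | _ => mint M c end; marr := marr M |}.

Lemma Nsk_agree M r' l : (forall c, In c l -> ~ is_sk c) -> agree_on l M (Nsk M r').
Proof.
  intros H c Hc; destruct c as [k|a]; simpl; auto.
  destruct k; auto. exfalso; apply (H _ Hc); eexists; eauto.
Qed.

Lemma agree_sym l M N : agree_on l M N -> agree_on l N M.
Proof. intros H c Hc; specialize (H c Hc); destruct c; simpl in *; auto. Qed.

Lemma add_lemma_inv P s Q' (p : formula * subst) i :
  Inv P s ->
  Q' = add_lemma (frames s) i p ->
  implies (Init P) (uclose (fst p)) ->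
  (forall M r, sat M r (uclose (fst p)) -> sat M r (forallQ (frames s i)) -> sat M r (Tr P) ->
     sat M r (prime (SX P) (uclose (fst p)))) ->
  (forall c, In c (consts (fst p)) -> ~ is_sk c) ->
  Inv P {| pobs := pobs s; level := level s; frames := Q' |}.
Proof.
  intros [I1 [I2 [I3 [I4 [I5 I6]]]]] -> Ha Hb Hc.
  assert (Hsub : forall j, incl (frames s j) (add_lemma (frames s) i p j)).
  { intros j; unfold add_lemma; destruct (Nat.leb j (S i)); auto using incl_refl, incl_tl. }
  assert (Hw : forall j M r, sat M r (forallQ (add_lemma (frames s) i p j)) -> sat M r (forallQ (frames s j))).
  { intros j M r H; apply sat_forallQ; intros q Hq; apply sat_forallQ with (Q := add_lemma (frames s) i p j); auto. apply Hsub; auto. }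
  unfold Inv; cbn [frames pobs level]; split; [|split; [|split; [|split; [|split]]]].
  - intros j M r H. unfold add_lemma. destruct (Nat.leb j (S i)); [|apply (I1 j); auto].
    apply sat_forallQ; intros q [<-|Hq]; auto. apply sat_forallQ with (Q := frames s j); auto. apply (I1 j); auto.
  - intros j M r [H1 H2]. pose proof (I2 j M r (conj (Hw _ _ _ H1) H2)) as H3.
    unfold add_lemma in *. destruct (Nat.leb (S j) (S i)) eqn:E; simpl; auto.
    destruct (Nat.leb j (S i)) eqn:E2.
    2:{ apply Nat.leb_le in E; apply Nat.leb_nle in E2; lia. }
    simpl in H1; destruct H1 as [H1a H1b]. split; auto.
    apply Hb; auto. apply sat_forallQ; intros q Hq; apply sat_forallQ with (Q := frames s j); auto.
    apply (incl_le _ I4 j i); auto. apply Nat.leb_le in E; lia.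
  - intros k Hk M r H. apply (I3 k Hk); auto.
  - intros j. unfold add_lemma. destruct (Nat.leb (S j) (S i)) eqn:E.
    + assert (Nat.leb j (S i) = true) as -> by (apply Nat.leb_le; apply Nat.leb_le in E; lia).
      apply incl_cons; [left; auto|]. apply incl_tl; auto.
    + destruct (Nat.leb j (S i)); auto. apply incl_tl; auto.
  - intros j q c Hq. unfold add_lemma in Hq. destruct (Nat.leb j (S i)); [destruct Hq as [<-|Hq]|]; eauto.
  - apply I6.
Qed.

Lemma state_cases P c : wf_problem P -> In c (SX P) ->
  (exists n, c = CI (IC false n)) \/ (exists n, c = CA (AC false n)).
Proof. intros [H _] Hc; apply H; auto. Qed.

Lemma prime_state P c0 : wf_problem P -> In c0 (SX P) ->
  cmap (prime_ic (SX P)) (prime_ac (SX P)) c0 = prime_cnst c0.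
Proof.
  intros W H. destruct (state_cases P c0 W H) as [[n ->]|[n ->]]; simpl; unfold prime_ic, unprime_ic, prime_ac, unprime_ac in *;
  rewrite inX_true; auto.
Qed.

Lemma msk_consts P m c : wf_problem P -> (forall c, In c (consts m) -> In c (SX P)) ->
  In c (consts (msk P m)) -> (exists i, c = CI (Sk i)) \/ exists c0, In c0 (SX P) /\ c = prime_cnst c0.
Proof.
  intros W Hm H. unfold msk in H. destruct (consts_subst2 _ _ _ H) as [H1|[i [k [E ->]]]].
  - unfold prime in H1. destruct (consts_map _ _ _ _ H1) as [c0 [H2 ->]].
    right; exists c0; split; auto. apply prime_state; auto.
  - left; exists i; unfold sk_subst in E; congruence.
Qed.

Lemma init_inv P : wf_problem P -> Inv P (init_state P).
Proof.
  intros W. pose proof W as (_ & [_ HIv] & HIc & _).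
  unfold Inv, init_state; cbn [frames pobs level].
  split; [|split; [|split; [|split; [|split]]]].
  - intros j M r H. destruct j; simpl; auto. split; auto.
    apply sat_uclose_intro; intros r'. apply (sat_vars M _ r r'); auto.
    rewrite HIv; simpl; tauto.
  - intros j M r _. simpl. auto.
  - intros k Hk; lia.
  - intros j; simpl; intros x [].
  - intros j p c Hp Hc. destruct j; simpl in Hp; [|tauto].
    destruct Hp as [<-|[]]. simpl in Hc. apply (state_not_sk P c W); auto.
  - intros m sg i c [].
Qed.

Lemma fsubst_vars (M : model) tau l r r' :
  (forall x, In x (fvars l) -> tau x = Some (Sk x)) ->
  (forall x, In x (fvars l) -> mint M (Sk x) = r' x) ->
  sat M r (fsubst tau l) -> sat M r' l.
Proof.
  intros H1 H2 H. apply sat_subst in H. apply (sat_vars M l (rs M tau r) r'); auto.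
  intros x Hx; unfold rs; rewrite H1; auto.
Qed.

Lemma newlemma_facts P L' l tau :
  ground L' -> abs_spec is_sk (unprime (SX P) L') l tau ->
  forall x, In x (fvars l) -> tau x = Some (Sk x).
Proof.
  intros [_ HL] (H1 & _ & _ & H4 & _ & H6) x Hx.
  assert (tau x <> None).
  { apply H1; split; auto. unfold unprime; rewrite fvars_map, HL; simpl; tauto. }
  destruct (tau x) as [k|] eqn:E; [|congruence].
  destruct (H4 _ _ E) as [j Ej]. injection Ej as ->. rewrite (H6 _ _ E). auto.
Qed.

Lemma step_inv P s s' : wf_problem P -> Inv P s -> q3step P s s' -> Inv P s'.
Proof.
  intros W HI Hs. pose proof HI as (I1 & I2 & I3 & I4 & I5 & I6).
  pose proof W as (WX & [_ HIv] & HIc & [_ HBv] & HBc & [_ HTv] & HTc).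
  assert (TrNoSk : forall c, In c (consts (Tr P)) -> ~ is_sk c).
  { intros c Hc [i ->]. destruct (HTc _ Hc) as [H|[a [Ha E]]].
    - apply (state_not_sk P _ W H); eexists; eauto.
    - destruct (state_cases P a W Ha) as [[n ->]|[n ->]]; discriminate. }
  destruct Hs.
  -
    unfold Inv; cbn [frames pobs level]; split; [|split; [|split; [|split; [|split]]]]; auto.
    intros k Hk M r Hk'. destruct (Nat.eq_dec k (level s)) as [->|Hne].
    + apply H. apply forallQ_qi; auto.
    + apply (I3 k); auto; lia.
  -
    unfold Inv; cbn [frames pobs level]; split; [|split; [|split; [|split; [|split]]]]; auto.
    intros m0 sg i c [E|Hin] Hc; [injection E as E1 E2 E3; subst; auto|eapply I6; eauto].
  -
    unfold Inv; cbn [frames pobs level]; split; [|split; [|split; [|split; [|split]]]]; auto.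
    intros m0 sg i0 c [E|Hin] Hc; [|eapply I6; eauto].
    injection E as E1 E2 E3; subst.
    destruct H1 as (_ & _ & _ & Hcp & _).
    destruct H2 as (_ & Hsub & Hnw & _).
    assert (Hc1 : In c (consts phi)) by (rewrite <- Hsub; apply consts_subst; auto).
    destruct (Hcp _ Hc1) as [Hc2 HnU].
    assert (HnU' : ~ (inXp (SX P) c \/ is_sk c)) by (intro; apply HnU; split; auto; apply Hnw; auto).
    simpl in Hc2; apply in_app_or in Hc2; destruct Hc2 as [Hc2|Hc2].
    + destruct (HTc _ Hc2); auto. exfalso; auto.
    + destruct (msk_consts P m c W (fun c => I6 _ _ _ c H) Hc2) as [[j ->]|[c0 [Hc0 ->]]];
      exfalso; apply HnU'; [right; eexists; eauto|left; exists c0; auto].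
  -
    pose proof H2 as (HLg & HLc & HLa & HLb).
    pose proof (newlemma_facts P L' l tau HLg H3) as F1.
    pose proof H3 as (_ & F2 & F3 & _).
    eapply add_lemma_inv; eauto; simpl.
    +
      intros M r HInit. apply sat_uclose_intro; intros r'.
      set (N := Nsk M r').
      assert (HN : sat N r (Init P)).
      { apply (sat_consts M N); auto. apply Nsk_agree. intros c Hc; apply (state_not_sk P c W); auto. }
      assert (HA : sat (UM P N) r (prime (SX P) (Init P))).
      { unfold prime; apply sat_map. apply (sat_consts _ N); auto.
        intros c Hc. destruct (state_cases P c W (HIc _ Hc)) as [[n ->]|[n ->]]; simpl; unfold prime_ic, unprime_ic, prime_ac, unprime_ac in *;
        rewrite !inX_true by auto; reflexivity. }
      assert (HL : sat (UM P N) r L') by (apply HLa; simpl; auto).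
      unfold UM in HL; apply sat_map in HL. fold (unprime (SX P) L') in HL. rewrite <- F2 in HL.
      apply (sat_consts N M); [apply agree_sym, Nsk_agree; auto|].
      apply (fsubst_vars N tau l r r'); auto.
    +
      intros M r _ HQ HTr. unfold prime; apply sat_map. apply sat_uclose_intro; intros r'.
      set (N := Nsk M r').
      assert (HQN : sat N r (qi (frames s i))).
      { apply forallQ_qi. apply sat_forallQ; intros q Hq.
        apply (sat_consts M N); [|apply sat_forallQ with (Q := frames s i); auto].
        apply Nsk_agree. rewrite consts_uclose. intros c; apply (I5 i q c Hq). }
      assert (HTN : sat N r (Tr P)) by (apply (sat_consts M N); auto; apply Nsk_agree; auto).
      assert (HL : sat N r L') by (apply HLa; simpl; auto).
      assert (HL2 : sat (UM P (PM P N)) r L').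
      { apply (sat_consts N); auto. intros c Hc. destruct (HLc c Hc) as [_ Hc2].
        destruct (msk_consts P m c W (fun c => I6 _ _ _ c H0) Hc2) as [[j ->]|[c0 [Hc0 ->]]].
        - reflexivity.
        - destruct (state_cases P c0 W Hc0) as [[n ->]|[n ->]]; simpl; unfold prime_ic, unprime_ic, prime_ac, unprime_ac in *;
          rewrite !inX_true by auto; reflexivity. }
      unfold UM in HL2; apply sat_map in HL2. fold (unprime (SX P) L') in HL2. rewrite <- F2 in HL2.
      apply (sat_consts (PM P N)).
      * intros c Hc. destruct c as [k|a]; simpl; auto.
        destruct k as [x|[] n]; simpl; auto.
        -- exfalso; apply (F3 _ Hc); eexists; eauto.
        -- destruct inX; reflexivity.
      * apply (fsubst_vars (PM P N) tau l r r'); auto.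
  -
    eapply add_lemma_inv; eauto; simpl.
    + intros M r Hu HQ HTr. apply H3; simpl; repeat split; auto. apply forallQ_qi; auto.
    + intros c Hc. apply (I5 i (FOr phi psi, sigma) c H0). simpl; apply in_or_app; auto.
Qed.

Theorem lemma4 (P : safety_problem) (s : q3state) :
  wf_problem P ->
  reachable P s ->
  forall k, 1 <= k -> k < level s ->
    interp_seq P (fun j => forallQ (frames s j)) k.
Proof.
  intros W R.
  assert (HI : Inv P s).
  { unfold reachable in R. apply clos_rt_rt1n in R.
    assert (H0 := init_inv P W). revert H0. induction R; intros; auto.
    apply IHR. eapply step_inv; eauto. }
  destruct HI as (I1 & I2 & I3 & _).
  intros k Hk Hlt. split; [|split]; auto.
Qed.
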